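(* Let $\epsilon>0$. Assume there exists a quantum algorithm $\mathcal{A}$ that takes a classical witness $w\in\{0,1\}^q$, makes $k$ queries to the graph oracle, and satisfies: for every $S\subseteq V$ with $|S|=\zeta$ there exists $w_S\in\{0,1\}^q$ with $\mathbb{E}_{G\leftarrow B_S}\Pr[\mathcal{A}^G(w_S)\text{ accepts}]\ge1-\epsilon$, and for every $\mathsf{NO}$ distribution $B_{\mathsf{NO}}$ and every $w\in\{0,1\}^q$, $\mathbb{E}_{G\leftarrow B_{\mathsf{NO}}}\Pr[\mathcal{A}^G(w)\text{ accepts}]\le\epsilon$. Then for every $\mu>0$ there exist a $(\mu,\zeta,2q/(\mu\log\ell))$-sunflower $\Sigma$ and a $k$-query quantum algorithm $\mathcal{A}'$ (taking no witness) such that $\mathbb{E}_{G\leftarrow B_S}\Pr[\mathcal{A}'^G\text{ accepts}]\ge1-\epsilon$ for every $S\in\Sigma$, and $\mathbb{E}_{G\leftarrow B_{\mathsf{NO}}}\Pr[\mathcal{A}'^G\text{ accepts}]\le\epsilon$ for every $\mathsf{NO}$ distribution $B_{\mathsf{NO}}$.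
   Context: $N=2^n$ (sufficiently large), $|V|=N$; $d=100$, $\ell=N^{1/10}$, $\gamma=N^{-1/10}$, $M=(1+\gamma)N$, $z=N^{9/10}$, $\zeta=(1+\gamma)z$, $\alpha=1/(2\cdot10^8)$; $\log$ is base $2$. Graphs are $d$-colored $d$-regular on $V$, accessed via $|j,\kappa,z\rangle\mapsto|j,\kappa,z\oplus G(j,\kappa)\rangle$ where $G(j,\kappa)$ is the $\kappa$-neighbor of $j$. A $\mathsf{NO}$ distribution is a distribution supported on $\alpha$-expanding graphs (second largest eigenvalue of the normalized adjacency matrix at most $1-\alpha$). Distribution $P_{M,\ell}$: take $V'$ of size $M$ partitioned into $\ell$ equal parts $V_1,\dots,V_\ell$; on each part take the union of $d$ independent uniformly random perfect matchings, the $\kappa$-th colored $\kappa$, giving $G'$; choose $k:V\to[\ell]$ uniformly at random and an injection $\iota:V\to V'$ with $\iota(j)$ uniformly random in $V_{k(j)}$ without replacement (outputting the edgeless graph if some part is exhausted); let $G$ contain $(j_1,j_2,\kappa)$ iff $(\iota(j_1),\iota(j_2),\kappa)\in G'$, and add a self-loop $(j,j,\kappa)$ wherever $j$ lacks a $\kappa$-colored edge. For $S\subseteq V$, $B_S$ is $P_{M,\ell}$ conditioned on $G$ having a connected component contained in $S$. A collection $\Sigma$ of $\zeta$-element subsets of $V$ is a $(\mu,\zeta,t)$-sunflower if there is $F\subseteq V$ with $|F|\le t$ (the core) such that every $S\in\Sigma$ contains $F$, and every $x\in(\bigcup_{S\in\Sigma}S)\setminus F$ satisfies $\Pr_{S\in\Sigma}[x\in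 S]\le(\zeta/N)^{1-\mu}$ ($S$ uniform in $\Sigma$). *)

(* Defs.v *)
From mathcomp Require Import all_boot all_order all_fingroup all_algebra.
From mathcomp Require Import complex.
From mathcomp Require Import Rstruct.
From Stdlib Require Rpower.

Set Implicit Arguments.
Unset Strict Implicit.
Unset Printing Implicit Defensive.
Import Order.TTheory GRing.Theory Num.Theory.
Local Open Scope ring_scope.

Notation RR := Rdefinitions.R.
Definition CC := (Rdefinitions.R)[i].

Definition log2 (x : RR) : RR := Rpower.ln x / Rpower.ln 2%:R.

(* ---------- parameters (N = 2^n with n = 10 m, so that l = N^(1/10) = 2^m) ---------- *)
Definition dd : nat := 100.
Definition nn (m : nat) : nat := 10 * m.
Definition ell (m : nat) : nat := 2 ^ m.
Definition zeta (m : nat) : nat := 2 ^ (9 * m) + 2 ^ (8 * m). (* (1+gamma) z *)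
Definition MM (m : nat) : nat := 2 ^ (10 * m) + 2 ^ (9 * m).  (* (1+gamma) N *)
Definition alpha : RR := (2 * 10 ^ 8)%:R^-1.

Definition vertex (n : nat) := {ffun 'I_n -> bool}.
Definition vxor n (a b : vertex n) : vertex n := [ffun i => a i (+) b i].
(* G(j,kappa) = kappa-neighbour of j *)
Definition graph (n : nat) := {ffun (vertex n * 'I_dd) -> vertex n}.

(* d-colored d-regular: each color class is a matching (possibly with self-loops) *)
Definition colored_regular n (G : graph n) : Prop :=
  forall kap : 'I_dd, involutive (fun j => G (j, kap)).

Definition norm_adj n (G : graph n) : 'M[RR]_(#|vertex n|) :=
  \matrix_(i, j) ((#|[set kap : 'I_dd | G (enum_val i, kap) == enum_val j]|)%:R / dd%:R).

(* second largest eigenvalue (with multiplicity) of the normalized adjacency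
   matrix is at most 1 - a: the list of eigenvalues (roots of the characteristic
   polynomial, with multiplicity) has at most one entry exceeding 1 - a. *)
Definition expanding (a : RR) n (G : graph n) : Prop :=
  exists s : seq RR,
    char_poly (norm_adj G) = \prod_(x <- s) ('X - x%:P) /\
    (count (fun x : RR => (1 - a < x)%R) s <= 1)%N.

Definition gadj n (G : graph n) : rel (vertex n) :=
  fun x y => [exists kap : 'I_dd, (G (x, kap) == y) || (G (y, kap) == x)].

Definition has_comp_in n (G : graph n) (S : {set vertex n}) : bool :=
  [exists j, [set j' | connect (gadj G) j j'] \subset S].

Definition Exp n (p : {ffun graph n -> RR}) (f : graph n -> RR) : RR :=
  \sum_G p G * f G.

Definition is_distr n (p : {ffun graph n -> RR}) : Prop :=
  (forall G, 0 <= p G) /\ \sum_G p G = 1.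

Definition NO_distr n (p : {ffun graph n -> RR}) : Prop :=
  is_distr p /\ forall G, p G != 0 -> colored_regular G /\ expanding alpha G.

(* The distribution P_{M,l}.  V' = 'I_M, part of x is x %/ zeta (M = l * zeta). *)
Definition part m (x : 'I_(MM m)) : nat := x %/ zeta m.

(* a perfect matching on every part, encoded as a fixed-point-free involution
   preserving the parts; uniform over such = independent uniform perfect
   matchings on each part *)
Definition vperm m := {perm 'I_(MM m)}.
Definition vcol m := {ffun 'I_dd -> vperm m}.
Definition vinj m := {ffun vertex (nn m) -> 'I_(MM m)}.
Definition vset n := {set vertex n}.
Definition part_matchings m : {set vperm m} :=
  [set s : vperm m |
     [forall x, (s x != x) && (s (s x) == x) && (part (s x) == part x)]].

Definition colorings m : {set vcol m} :=
  [set sg : vcol m | [forall kap, sg kap \in part_matchings m]].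

Definition fits m (k : {ffun vertex (nn m) -> 'I_(ell m)}) : bool :=
  [forall i : 'I_(ell m), (#|[set j | k j == i]| <= zeta m)%N].

Definition injs m (k : {ffun vertex (nn m) -> 'I_(ell m)}) :
    {set vinj m} :=
  [set io : vinj m | injectiveb io && [forall j, part (io j) == val (k j)]].

(* the graph G induced by G' (given by sg) and iota, with self-loops added *)
Definition induced_graph m (sg : {ffun 'I_dd -> {perm 'I_(MM m)}})
    (io : {ffun vertex (nn m) -> 'I_(MM m)}) : graph (nn m) :=
  [ffun jk : vertex (nn m) * 'I_dd =>
     match [pick j2 | io j2 == sg jk.2 (io jk.1)] with
     | Some j2 => j2 | None => jk.1 end].

Definition edgeless_graph n : graph n := [ffun jk : vertex n * 'I_dd => jk.1].

Definition ExpP m (f : graph (nn m) -> RR) : RR :=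
  (#|colorings m|%:R)^-1 * \sum_(sg in colorings m)
    ((ell m ^ 2 ^ nn m)%:R)^-1 * \sum_(k : {ffun vertex (nn m) -> 'I_(ell m)})
      (if fits k then
         (#|injs k|%:R)^-1 * \sum_(io in injs k) f (induced_graph sg io)
       else f (edgeless_graph (nn m))).

Definition ExpB m (S : {set vertex (nn m)}) (f : graph (nn m) -> RR) : RR :=
  ExpP (fun G => f G * (has_comp_in G S)%:R) / ExpP (fun G => (has_comp_in G S)%:R).

(* registers |j, kappa, z> plus a workspace of dimension a+1 *)
Definition qreg (n a : nat) := (vertex n * 'I_dd * vertex n * 'I_a.+1)%type.
Definition qop (T : finType) := T -> T -> CC.
Definition qstate (T : finType) := T -> CC.

Definition unitary (T : finType) (U : qop T) : Prop :=
  (forall x x', \sum_y U x y * (U x' y)^* = (x == x')%:R) /\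
  (forall x x', \sum_y (U y x)^* * U y x' = (x == x')%:R).

Definition apply_op (T : finType) (U : qop T) (psi : qstate T) : qstate T :=
  fun x => \sum_y U x y * psi y.

Definition basis_state (T : finType) (x0 : T) : qstate T :=
  fun x => (x == x0)%:R.

Definition oracle n a (G : graph n) (psi : qstate (qreg n a)) : qstate (qreg n a) :=
  fun x => let: (j, kap, z, w) := x in psi (j, kap, vxor z (G (j, kap)), w).

(* k-query algorithm: U_k O U_{k-1} ... O U_0 applied to a basis state, then
   measurement of the accepting basis states *)
Record qalg (n k a : nat) := QAlg {
  qa_U : 'I_k.+1 -> qop (qreg n a);
  qa_start : qreg n a;
  qa_acc : {set qreg n a} }.

Definition valid_qalg n k a (A : qalg n k a) : Prop := forall i, unitary (qa_U A i).

Fixpoint run n k a (A : qalg n k a) (G : graph n) (i : nat) : qstate (qreg n a) :=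
  match i with
  | 0 => apply_op (qa_U A ord0) (basis_state (qa_start A))
  | i'.+1 => apply_op (qa_U A (inord i)) (oracle G (run A G i'))
  end.

Definition normsq (c : CC) : RR := complex.Re c ^+ 2 + complex.Im c ^+ 2.

Definition acc_prob n k a (A : qalg n k a) (G : graph n) : RR :=
  \sum_(x in qa_acc A) normsq (run A G k x).

Definition sunflower n (mu : RR) (z : nat) (t : RR) (Sig : {set vset n}) : Prop :=
  Sig != set0 /\ (forall S, S \in Sig -> #|S| = z) /\
  exists F : {set vertex n},
    #|F|%:R <= t /\ (forall S, S \in Sig -> F \subset S) /\
    forall x, x \in \bigcup_(S in Sig) S -> x \notin F ->
      #|[set S in Sig | x \in S]|%:R / #|Sig|%:R
        <= Rpower.Rpower (z%:R / (2 ^ n)%:R) (1 - mu).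

(* Main.v *)
Require Import Defs.
From mathcomp Require Import all_boot all_order all_fingroup all_algebra.
From mathcomp Require Import complex Rstruct.
From mathcomp Require Import zify ring lra.
From Stdlib Require Import Rpower Exp_prop.
Import Order.TTheory GRing.Theory Num.Theory.

Lemma binom_ratio (N z f : nat) : (f <= z)%N -> (z <= N)%N ->
  ('C(N - f, z - f) * N ^ f <= 'C(N, z) * z ^ f)%N.
Proof.
elim: f => [|f IH] hfz hzN; first by rewrite !subn0 !expn0.
have IH' := IH (ltnW hfz) hzN.
set b := 'C(N - f, z - f) in IH'.
set b' := 'C(N - f.+1, z - f.+1).
have E : ((N - f) * b' = (z - f) * b)%N.
  have := mul_bin_diag (N - f) (z - f.+1).
  have -> : (z - f.+1).+1 = z - f by lia.
  have -> : (N - f).-1 = N - f.+1 by lia.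
  by [].
have hb : (b' * N <= b * z)%N.
  rewrite -(@leq_pmul2l (N - f)); last by lia.
  rewrite mulnA E.
  have : ((z - f) * N <= (N - f) * z)%N by nia.
  move=> h.
  have -> : ((z - f) * b * N = b * ((z - f) * N))%N by rewrite -mulnA mulnCA.
  have -> : ((N - f) * (b * z) = b * ((N - f) * z))%N by rewrite mulnCA.
  by rewrite leq_mul2l h orbT.
rewrite expnS mulnA.
apply: (leq_trans (leq_mul hb (leqnn _))).
rewrite expnS -mulnA mulnCA [X in (_ <= X)%N]mulnCA.
by rewrite leq_mul2l IH' orbT.
Qed.

Lemma count_sup (T : finType) (F : {set T}) (z : nat) :
  #|[set S : {set T} | F \subset S & #|S| == z]| <= 'C(#|T| - #|F|, z - #|F|).
Proof.
set D := [set S : {set T} | F \subset S & #|S| == z].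
have inj : {in D &, injective (fun S => S :\: F)}.
  move=> S1 S2; rewrite /D !inE => /andP[h1 _] /andP[h2 _] e.
  by rewrite -(setID S1 F) -(setID S2 F) /= e (setIidPr h1) (setIidPr h2).
have e : #|T| - #|F| = #|~: F| by rewrite -(cardsC F) addKn.
rewrite -(card_in_imset inj) e -cards_draws.
apply: subset_leq_card; apply/subsetP => A /imsetP[S hSD ->]; move: hSD; rewrite /D inE => /andP[hFS /eqP hS].
rewrite inE; apply/andP; split.
  by rewrite setDE subsetIr.
by rewrite cardsD (setIidPr hFS) hS.
Qed.

Local Open Scope ring_scope.

Lemma core_lemma (T : finType) (Sig0 : {set {set T}}) (p : RR) :
  0 < p -> Sig0 != set0 ->
  exists F : {set T},
    [set S in Sig0 | F \subset S] != set0 /\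
    #|Sig0|%:R * p ^+ #|F| <= #|[set S in Sig0 | F \subset S]|%:R /\
    forall x, x \notin F ->
      #|[set S in [set S in Sig0 | F \subset S] | x \in S]|%:R
        <= p * #|[set S in Sig0 | F \subset S]|%:R.
Proof.
move=> p0 ne0.
pose good (F : {set T}) :=
  (#|Sig0|%:R * p ^+ #|F| <= #|[set S in Sig0 | F \subset S]|%:R)
  && ([set S in Sig0 | F \subset S] != set0).
have g0 : good set0.
  rewrite /good; have -> : [set S in Sig0 | set0 \subset S] = Sig0.
    by apply/setP => S; rewrite inE sub0set andbT.
  by rewrite cards0 expr0 mulr1 lexx ne0.
case: (@arg_maxnP _ set0 good (fun F : {set T} => #|F|) g0) => F /andP[gF neF] maxF.
exists F; split => //; split => // x xF.
rewrite leNgt; apply/negP => hlt.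
have gx : good (x |: F).
  rewrite /good; have -> : [set S in Sig0 | x |: F \subset S] =
            [set S in [set S in Sig0 | F \subset S] | x \in S].
    apply/setP => S; rewrite !inE subUset sub1set.
    by case: (S \in Sig0); case: (x \in S); case: (F \subset S).
  apply/andP; split.
    rewrite cardsU1 xF add1n exprS mulrCA mulrC.
    apply/ltW/(le_lt_trans _ hlt).
    by rewrite mulrC; apply: ler_wpM2l => //; apply: ltW.
  apply/negP => /eqP e; move: hlt; rewrite e cards0.
  apply/negP; rewrite -leNgt.
  by rewrite mulr_ge0 // ltW.
have := maxF _ gx.
rewrite cardsU1 xF add1n /geq /= ltnn. done.
Qed.

Lemma ln_le' (x y : RR) : 0 < x -> x <= y -> ln x <= ln y.
Proof.
move=> x0; rewrite le_eqVlt => /orP[/eqP -> //|xy].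
by apply/ltW/RltP/ln_increasing; apply/RltP.
Qed.

Lemma ln_powR (x : RR) k : 0 < x -> ln (x ^+ k) = k%:R * ln x.
Proof. by move=> x0; rewrite -RpowE ln_pow ?INRE //; apply/RltP. Qed.

Lemma ln_mulR (x y : RR) : 0 < x -> 0 < y -> ln (x * y) = ln x + ln y.
Proof. by move=> x0 y0; rewrite ln_mult //; apply/RltP. Qed.

Lemma ln2_gt0 : 0 < ln 2%:R.
Proof.
have -> : (0 : RR) = ln 1 by rewrite ln_1.
apply/RltP/ln_increasing; apply/RltP => //.
by rewrite ltr1n.
Qed.

Lemma log2_ell m : log2 (ell m)%:R = m%:R.
Proof.
rewrite /log2 /ell natrX ln_powR ?ltr0n // mulfK //.
by apply/lt0r_neq0/ln2_gt0.
Qed.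

Lemma core_bound (N z q f m : nat) (mu : RR) : 0 < mu -> (2 <= m)%N -> (0 < z)%N ->
  (z * 2 ^ (m - 1) <= N)%N ->
  (Rpower (z%:R / N%:R) (1 - mu)) ^+ f * N%:R ^+ f <= 2%:R ^+ q * z%:R ^+ f ->
  f%:R <= 2 * q%:R / (mu * m%:R).
Proof.
move=> mu0 m2 z0 zN H.
have N0 : (0 < N)%N.
  by apply: leq_trans zN; rewrite muln_gt0 z0 expn_gt0.
have z0R : (0 : RR) < z%:R by rewrite ltr0n.
have N0R : (0 : RR) < N%:R by rewrite ltr0n.
set p := Rpower _ _ in H.
have p0 : 0 < p by apply/RltP/exp_pos.
have lnp : ln p = (1 - mu) * (ln z%:R - ln N%:R).
  rewrite /p ln_Rpower ln_mulR ?invr_gt0 //.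
  by rewrite -RinvE ln_Rinv //; apply/RltP.
have := ln_le' _ _ (mulr_gt0 (exprn_gt0 f p0) (exprn_gt0 f N0R)) H.
rewrite ln_mulR ?exprn_gt0 // ln_mulR ?exprn_gt0 // ?ltr0n // !ln_powR // ?ltr0n // lnp => h1.
have h2 : (m%:R - 1) * ln 2%:R <= ln N%:R - ln z%:R.
  have hzN : z%:R * 2%:R ^+ (m - 1) <= N%:R :> RR.
    by rewrite -natrX -natrM ler_nat.
  have := ln_le' _ _ (mulr_gt0 z0R (exprn_gt0 (m - 1) (ltr0n _ 2))) hzN.
  rewrite ln_mulR ?exprn_gt0 // ?ln_powR // ?ltr0n //.
  rewrite natrB ?(leq_trans _ m2) //.
  by lra.
have l0 := ln2_gt0.
have m2R : (2 : RR) <= m%:R by rewrite ler_nat.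
have f0 : (0 : RR) <= f%:R by [].
have h3 : mu * f%:R * m%:R <= 2 * q%:R.
  have e1 : mu * f%:R * (ln N%:R - ln z%:R) <= q%:R * ln 2%:R by nra.
  have e2 : mu * f%:R * ((m%:R - 1) * ln 2%:R) <= q%:R * ln 2%:R.
    apply: le_trans e1; apply: ler_wpM2l => //; apply: mulr_ge0 => //; exact: ltW.
  have e4 : 0 <= mu * f%:R * ln 2%:R * (m%:R - 2).
    rewrite mulr_ge0 ?subr_ge0 // mulr_ge0 ?mulr_ge0 //; exact: ltW.
  have e3 : (mu * f%:R * m%:R) * ln 2%:R <= (2 * q%:R) * ln 2%:R by nra.
  by rewrite -(ler_pM2r l0).
rewrite ler_pdivlMr ?mulr_gt0 ?ltr0n //; last by apply: leq_trans m2.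
by rewrite mulrCA mulrA.
Qed.

Lemma sum_in_card (T : finType) (A : {pred T}) :
  (\sum_(x : T) ((x \in A) : nat) = #|A|)%N.
Proof.
rewrite -sum1_card [RHS]big_mkcond /=; apply: eq_bigr => x _.
by case: (x \in A).
Qed.

Lemma zeta_bound m : (1 <= m)%N -> (zeta m * 2 ^ (m - 1) <= 2 ^ nn m)%N.
Proof.
move=> m1; rewrite /zeta /nn mulnDl -!expnD.
have e : (10 * m = (9 * m + (m - 1)).+1)%N by lia.
rewrite e expnS mul2n -addnn leq_add2l leq_pexp2l //; lia.
Qed.

Lemma card_vertex n : #|vertex n| = (2 ^ n)%N.
Proof. by rewrite card_ffun card_bool card_ord. Qed.

Theorem lemma18 :
  exists m0 : nat, forall m : nat, (m0 <= m)%N ->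
  forall (eps : RR), 0 < eps ->
  forall (q k a : nat) (A : {ffun 'I_q -> bool} -> qalg (nn m) k a),
    (forall w, valid_qalg (A w)) ->
    (forall S : {set vertex (nn m)}, #|S| = zeta m ->
       exists wS, 1 - eps <= ExpB S (acc_prob (A wS))) ->
    (forall p, NO_distr p -> forall w, Exp p (acc_prob (A w)) <= eps) ->
  forall mu : RR, 0 < mu ->
    exists Sig : {set vset (nn m)},
      sunflower mu (zeta m) (2 * q%:R / (mu * log2 (ell m)%:R)) Sig /\
      exists (a' : nat) (A' : qalg (nn m) k a'),
        valid_qalg A' /\
        (forall S, S \in Sig -> 1 - eps <= ExpB S (acc_prob A')) /\
        (forall p, NO_distr p -> Exp p (acc_prob A') <= eps).
Proof.
exists 2%N => m m2 eps eps0 q k a A validA hyes hno mu mu0.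
set n := nn m.
set N := (2 ^ n)%N.
set z := zeta m.
have zN : (z * 2 ^ (m - 1) <= N)%N by apply: zeta_bound; apply: ltnW.
have z0 : (0 < z)%N by rewrite /z /zeta addn_gt0 expn_gt0.
have zleN : (z <= N)%N.
  by apply: leq_trans zN; rewrite leq_pmulr // expn_gt0.
pose W := {ffun 'I_q -> bool}.
pose good (w : W) (S : {set vertex n}) := 1 - eps <= ExpB S (acc_prob (A w)).
pose D := [set S : {set vertex n} | #|S| == z].
pose Sw (w : W) := [set S in D | good w S].
pose w0 : W := [ffun=> false].
case: (@arg_maxnP W w0 xpredT (fun w => #|Sw w|) isT) => wm _ maxw.
have cardD : #|D| = 'C(N, z) by rewrite /D card_draws card_vertex.
have pig : (#|D| <= 2 ^ q * #|Sw wm|)%N.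
  have cW : #|W| = (2 ^ q)%N by rewrite card_ffun card_bool card_ord.
  apply: (@leq_trans (\sum_(S : {set vertex n}) \sum_(w : W) ((S \in Sw w) : nat))).
    rewrite -sum1_card [X in (X <= _)%N]big_mkcond /=; apply: leq_sum => S _.
    case SD: (S \in D) => //.
    have hS : #|S| == z by move: SD; rewrite /D inE.
    have [wS hw] := hyes S (eqP hS).
    rewrite (bigD1 wS) //= /Sw inE SD /good hw.
    exact: leq_addr.
  rewrite exchange_big /=.
  apply: (@leq_trans (\sum_(w : W) #|Sw wm|)).
    apply: leq_sum => w _; rewrite sum_in_card; exact: maxw.
  by rewrite sum_nat_const cW.
set Sig0 := Sw wm.
have ne0 : Sig0 != set0.
  apply/negP => /eqP e.
  have c : #|Sw wm| = 0%N by move: e; rewrite /Sig0 => ->; rewrite cards0.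
  move: pig; rewrite c muln0 cardD leqn0.
  by rewrite -[_ == 0%N]negbK -lt0n bin_gt0 zleN.
pose p := Rpower (z%:R / N%:R) (1 - mu).
have p0 : 0 < p by apply/RltP/exp_pos.
have [F [neS [hlow hfreq]]] := @core_lemma _ Sig0 p p0 ne0.
set Sig := [set S in Sig0 | F \subset S] in neS hlow hfreq.
have SigD : forall S, S \in Sig -> (S \in D) && good wm S.
  by move=> S; rewrite /Sig /Sig0 /Sw !inE => /andP[/andP[-> ->] _].
have SigF : forall S, S \in Sig -> F \subset S.
  by move=> S; rewrite /Sig !inE => /andP[_ ->].
have Sigz : forall S, S \in Sig -> #|S| = z.
  by move=> S /SigD /andP[]; rewrite /D inE => /eqP.
exists Sig; split; last first.
  exists a, (A wm); split; first exact: validA.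
  split; last by move=> p1 hp1; apply: hno.
  by move=> S /SigD /andP[].
split => //; split => //.
exists F; split; last split => //; last first.
  move=> x _ xF.
  have Sig0R : (0 : RR) < #|Sig|%:R by rewrite ltr0n card_gt0.
  by rewrite ler_pdivrMr //; apply: hfreq.
set f := #|F|.
have [S0 S0in] := set0Pn _ neS.
have fz : (f <= z)%N by rewrite -(Sigz _ S0in); apply: subset_leq_card; apply: SigF.
have h1 : (#|Sig| <= 'C(N - f, z - f))%N.
  apply: leq_trans (_ : #|[set S : {set vertex n} | F \subset S & #|S| == z]| <= _)%N.
    apply: subset_leq_card; apply/subsetP => S hS; rewrite inE SigF //=.
    by rewrite Sigz.
  by rewrite /N -card_vertex; apply: count_sup.
have h2 := @binom_ratio N z f fz zleN.
have C0 : (0 : RR) < 'C(N, z)%:R by rewrite ltr0n bin_gt0.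
have H : p ^+ f * N%:R ^+ f <= 2%:R ^+ q * z%:R ^+ f.
  rewrite -(ler_pM2l C0).
  apply: (@le_trans _ _ (2%:R ^+ q * 'C(N - f, z - f)%:R * N%:R ^+ f)).
    rewrite mulrA; apply: ler_wpM2r; first by rewrite exprn_ge0.
    apply: (@le_trans _ _ (2%:R ^+ q * #|Sig0|%:R * p ^+ f)).
      apply: ler_wpM2r; first by rewrite exprn_ge0 // ltW.
      by rewrite -cardD -natrX -natrM ler_nat.
    rewrite -mulrA; apply: ler_wpM2l; first by rewrite exprn_ge0.
    apply: le_trans hlow _.
    by rewrite ler_nat.
  rewrite -!natrX -!natrM ler_nat -mulnA [X in (_ <= X)%N]mulnCA leq_mul2l h2 orbT //.
rewrite log2_ell.
exact: (@core_bound N z q f m mu mu0 m2 z0 zN H).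
Qed.
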